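(* Let $\ast_n$ be a star graph and let $f:\ast_n\to\ast_n$ be a star map. Then the split map $S(f):S(\ast_n)\to S(\ast_n)$ is a homotopy equivalence.
   Context: The star $\ast_n=K_{1,n}$ has a center vertex joined by edges $x_1,\dots,x_n$ to $n$ tips; orient each edge from the center to its tip, uppercase $X_i$ denoting reverse traversal. A graph map sends vertices to vertices and edges to edge paths (backtracking allowed). A star map is a graph map $f:\ast_n\to\ast_n$ fixing the center and preserving the bipartite structure (tips to tips), such that the map sending each edge to the first edge of its image path is a permutation; thus each $f(x_i)$ is an edge path with an odd number $\|f(x_i)\|$ of edges. Prototype maps on $P_7$ (vertices $v_0,v_1$, edges $a,\dots,g$ oriented $v_0\to v_1$, uppercase = reversed): $\phi_1=\mathrm{id}$ and, for $m\ge0$, $\phi_{3+2m}$: $a\mapsto aG(aB)^ma$, $b\mapsto bD(bC)^mb$, $c\mapsto cF(cA)^mc$, $d\mapsto aB(aB)^ma$, $e\mapsto cB(aB)^ma$, $f\mapsto aC(aB)^ma$, $g\mapsto bE(bA)^mb$. The split graph $S(\ast_n)$ replaces each edge $x_i$ by seven parallel edges $a_i,\dots,g_i$ from the center to the $i$-th tip. The split map $S(f)$ sends $y_i$ ($y\in\{a,\dots,g\}$) to the path obtained from the word $\phi_{\|f(x_i)\|}(y)$ by giving its $t$-th letter the subscript of the $t$-th edge of $f(x_i)$. *)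

(* Defs.v *)
From mathcomp Require Import all_boot.

Set Implicit Arguments. Unset Strict Implicit. Unset Printing Implicit Defensive.

Record graph := Graph {
  gV : finType; gE : finType; gsrc : gE -> gV; gtgt : gE -> gV }.

(* A letter is an edge with a direction: (e, true) = e, (e, false) = E (reverse). *)
Definition letter (G : graph) := (gE G * bool)%type.
Definition lsrc (G : graph) (l : letter G) : gV G :=
  if l.2 then gsrc l.1 else gtgt l.1.
Definition ltgt (G : graph) (l : letter G) : gV G :=
  if l.2 then gtgt l.1 else gsrc l.1.
Definition linv (G : graph) (l : letter G) : letter G := (l.1, ~~ l.2).

Fixpoint is_path (G : graph) (u : gV G) (p : seq (letter G)) (v : gV G) : bool :=
  match p with
  | [::] => u == v
  | l :: p' => (lsrc l == u) && is_path (ltgt l) p' v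
  end.

Definition rev_path (G : graph) (p : seq (letter G)) : seq (letter G) :=
  rev (map (@linv G) p).

Definition reduce (G : graph) (p : seq (letter G)) : seq (letter G) :=
  foldr (fun l acc => match acc with
                      | l' :: acc' => if l' == linv l then acc' else l :: acc
                      | [::] => [:: l]
                      end) [::] p.

Record gmap (G H : graph) := GMap {
  gmv : gV G -> gV H;
  gme : gE G -> seq (letter H) }.

Definition is_gmap (G H : graph) (f : gmap G H) : Prop :=
  forall e, is_path (gmv f (gsrc e)) (gme f e) (gmv f (gtgt e)).

Definition gmap_path (G H : graph) (f : gmap G H) (p : seq (letter G))
  : seq (letter H) :=
  flatten (map (fun l : letter G =>
                  if l.2 then gme f l.1 else rev_path (gme f l.1)) p).

Definition gmap_comp (G H K : graph) (g : gmap H K) (f : gmap G H) : gmap G K :=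
  GMap (fun v => gmv g (gmv f v)) (fun e => gmap_path g (gme f e)).

Definition gmap_id (G : graph) : gmap G G :=
  GMap (fun v => v) (fun e => [:: (e, true)]).

(* Homotopy of graph maps h, k : G -> H (realized topologically, edges mapped
   linearly along their edge paths): there are vertex tracks p_v from h(v) to
   k(v) such that for each edge e : u -> w, the path h(e) is homotopic rel
   endpoints to p_u . k(e) . p_w^-1 (i.e. they have the same free reduction). *)
Definition homotopic (G H : graph) (h k : gmap G H) : Prop :=
  exists tr : gV G -> seq (letter H),
    (forall v, is_path (gmv h v) (tr v) (gmv k v)) /\
    (forall e, reduce (gme h e) =
               reduce (tr (gsrc e) ++ gme k e ++ rev_path (tr (gtgt e)))).

Definition homotopy_equivalence (G H : graph) (f : gmap G H) : Prop :=
  is_gmap f /\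
  exists g : gmap H G, is_gmap g /\
    homotopic (gmap_comp g f) (gmap_id G) /\
    homotopic (gmap_comp f g) (gmap_id H).

(* The star K_{1,n}: center None, tips Some i, edge x_i : None -> Some i. *)
Definition star (n : nat) : graph :=
  @Graph (option 'I_n) 'I_n (fun _ => None) (fun i => Some i).

Definition star_map (n : nat) (f : gmap (star n) (star n)) : Prop :=
  [/\ is_gmap f,
      gmv f None = None,
      (forall i : 'I_n, gmv f (Some i) != None) &
      injective (fun i : 'I_n => (head (i, true) (gme f i)).1)].

(* The split graph S(star_n): edges y_i, y in {a,...,g} = 'I_7 (a = 0, ..., g = 6). *)
Definition split_star (n : nat) : graph :=
  @Graph (option 'I_n) ('I_7 * 'I_n)%type (fun _ => None) (fun yi => Some yi.2).

Definition L (k : nat) (b : bool) : 'I_7 * bool :=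
  (Ordinal (ltn_pmod k (isT : 0 < 7)), b).
Definition phi_word (m : nat) (y0 y1 y2 y3 : nat) : seq ('I_7 * bool) :=
  [:: L y0 true; L y1 false] ++
  flatten (nseq m [:: L y2 true; L y3 false]) ++ [:: L y0 true].
Definition phi (k : nat) (y : 'I_7) : seq ('I_7 * bool) :=
  if k == 1 then [:: (y, true)] else
  let m := (k - 3)./2 in
  match val y with
  | 0 => phi_word m 0 6 0 1        (* a |-> a G (a B)^m a *)
  | 1 => phi_word m 1 3 1 2        (* b |-> b D (b C)^m b *)
  | 2 => phi_word m 2 5 2 0        (* c |-> c F (c A)^m c *)
  | 3 => [:: L 0 true; L 1 false] ++ flatten (nseq m [:: L 0 true; L 1 false])
           ++ [:: L 0 true]        (* d |-> a B (a B)^m a *)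
  | 4 => [:: L 2 true; L 1 false] ++ flatten (nseq m [:: L 0 true; L 1 false])
           ++ [:: L 0 true]        (* e |-> c B (a B)^m a *)
  | 5 => [:: L 0 true; L 2 false] ++ flatten (nseq m [:: L 0 true; L 1 false])
           ++ [:: L 0 true]        (* f |-> a C (a B)^m a *)
  | _ => phi_word m 1 4 1 0        (* g |-> b E (b A)^m b *)
  end.

(* the split map S(f): y_i |-> phi_{||f(x_i)||}(y), the t-th letter receiving
   the subscript of the t-th edge of f(x_i) *)
Definition split_map (n : nat) (f : gmap (star n) (star n))
  : gmap (split_star n) (split_star n) :=
  @GMap (split_star n) (split_star n)
       (fun v : option 'I_n => (gmv f v : option 'I_n))
       (fun yi : gE (split_star n) =>
          let y : 'I_7 := (yi : 'I_7 * 'I_n).1 in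
          let i : gE (star n) := (yi : 'I_7 * 'I_n).2 in
          [seq (((ll.1.1, (ll.2.1 : 'I_n)) : gE (split_star n)), ll.1.2)
          | ll <- zip (phi (size (gme f i)) y) (gme f i)]).

(* Main.v *)
Require Import Defs.
From mathcomp Require Import all_boot.
From Stdlib Require Import Setoid Morphisms.
Import Defs.
Set Implicit Arguments. Unset Strict Implicit. Unset Printing Implicit Defensive.

Section FreeG.
Variable G : graph.
Implicit Types (l : letter G) (p q r : seq (letter G)).

Lemma linvK : involutive (@linv G).
Proof. by case=> e b; rewrite /linv /= negbK. Qed.

Definition step l (acc : seq (letter G)) :=
  match acc with
  | l' :: acc' => if l' == linv l then acc' else l :: acc
  | [::] => [:: l]
  end.

Fixpoint reduced (s : seq (letter G)) : bool :=
  match s with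
  | x :: s' => match s' with y :: _ => (y != linv x) && reduced s' | [::] => true end
  | _ => true
  end.

Definition act p acc := foldr step acc p.

Lemma reduceE p : reduce p = act p [::].
Proof. by []. Qed.

Lemma reduced_tail l acc : reduced (l :: acc) -> reduced acc.
Proof. by case: acc => //= ? ? /andP[]. Qed.

Lemma step_reduced l acc : reduced acc -> reduced (step l acc).
Proof.
case: acc => [|l' acc] //= H.
case: ifP => E; first exact: reduced_tail H.
rewrite /= H andbT; apply/negP => /eqP E2; move: E; rewrite E2. by rewrite eqxx.
Qed.

Lemma act_reduced p acc : reduced acc -> reduced (act p acc).
Proof. by elim: p => //= l p IH H; apply: step_reduced; apply: IH. Qed.

Lemma step_inv l acc : reduced acc -> step l (step (linv l) acc) = acc.
Proof.
case: acc => [|l' acc] /=; first by rewrite eqxx.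
rewrite linvK; case: (eqVneq l' l) => [->|ne] H.
  case: acc H => [|l'' acc] /=; first by [].
  by case/andP => /negbTE ->.
by rewrite /= eqxx.
Qed.

Lemma step_inv' l acc : reduced acc -> step (linv l) (step l acc) = acc.
Proof. by move=> H; rewrite -{2}(linvK l) step_inv. Qed.


Lemma rev_path_cons l p : rev_path (l :: p) = rev_path p ++ [:: linv l].
Proof. by rewrite /rev_path /= rev_cons cats1. Qed.

Lemma rev_path_cat p q : rev_path (p ++ q) = rev_path q ++ rev_path p.
Proof. by rewrite /rev_path map_cat rev_cat. Qed.

Lemma rev_pathK : involutive (@rev_path G).
Proof. by move=> p; rewrite /rev_path map_rev revK -map_comp map_id_in // => x _; apply: linvK. Qed.

Lemma act_cat p q acc : act (p ++ q) acc = act p (act q acc).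
Proof. by rewrite /act foldr_cat. Qed.

Lemma act_K p acc : reduced acc -> act p (act (rev_path p) acc) = acc.
Proof.
elim: p acc => //= l p IH acc H.
by rewrite rev_path_cons act_cat /= IH ?step_inv // step_reduced.
Qed.

Lemma act_K' p acc : reduced acc -> act (rev_path p) (act p acc) = acc.
Proof. by move=> H; rewrite -{2}(rev_pathK p) act_K. Qed.

Definition hom p q := forall acc, reduced acc -> act p acc = act q acc.

Lemma hom_reduce p q : hom p q -> reduce p = reduce q.
Proof. by move=> H; rewrite !reduceE H. Qed.

#[global] Instance hom_equiv : Equivalence hom.
Proof.
split; first by move=> ? ?.
  by move=> ? ? H ? ?; rewrite H.
by move=> ? ? ? H1 H2 ? ?; rewrite H1 // H2.
Qed.

#[global] Instance cat_proper : Proper (hom ==> hom ==> hom) (@cat (letter G)).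
Proof.
move=> p p' Hp q q' Hq acc H.
by rewrite !act_cat Hq // Hp // act_reduced.
Qed.

#[global] Instance cons_proper : Proper (eq ==> hom ==> hom) (@cons (letter G)).
Proof. by move=> l _ <- q q' Hq acc H /=; rewrite Hq. Qed.

#[global] Instance rev_proper : Proper (hom ==> hom) (@rev_path G).
Proof.
move=> p q Hp acc H.
have R := act_reduced (rev_path q) H.
transitivity (act (rev_path p) (act q (act (rev_path q) acc))); first by rewrite (act_K q H).
by rewrite -(Hp _ R) act_K'.
Qed.

Lemma canc1 p q : hom (p ++ rev_path p ++ q) q.
Proof. by move=> acc H; rewrite !act_cat act_K // act_reduced. Qed.
Lemma canc2 p q : hom (rev_path p ++ p ++ q) q.
Proof. by move=> acc H; rewrite !act_cat act_K' // act_reduced. Qed.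
Lemma canc1' p : hom (p ++ rev_path p) [::].
Proof. by rewrite -[_ ++ _]cats0 -catA canc1. Qed.
Lemma canc2' p : hom (rev_path p ++ p) [::].
Proof. by rewrite -[_ ++ _]cats0 -catA canc2. Qed.
Lemma canct e q : hom ((e, true) :: (e, false) :: q) q.
Proof. by move=> acc H /=; have := step_inv (e, true) (act_reduced q H). Qed.
Lemma cancf e q : hom ((e, false) :: (e, true) :: q) q.
Proof. by move=> acc H /=; have := step_inv' (e, true) (act_reduced q H). Qed.

Lemma is_path_cat (u v w : gV G) p q :
  is_path u p v -> is_path v q w -> is_path u (p ++ q) w.
Proof.
elim: p u => [|l p IH] u /=; first by move/eqP ->.
by case/andP=> -> /IH H1 /H1.
Qed.

Lemma is_path_rev (u v : gV G) p : is_path u p v -> is_path v (rev_path p) u.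
Proof.
elim: p u => [|l p IH] u /=; first by move/eqP ->.
case/andP=> /eqP <- /IH H1; rewrite rev_path_cons.
apply: is_path_cat H1 _ => /=.
by case: l => e [] /=; rewrite !eqxx.
Qed.

End FreeG.


Section GP.
Variables G H K : graph.

Definition img (F : gmap G H) (l : letter G) :=
  if l.2 then gme F l.1 else rev_path (gme F l.1).

Lemma gp_cons (F : gmap G H) l p : gmap_path F (l :: p) = img F l ++ gmap_path F p.
Proof. by []. Qed.

Lemma gp_cat (F : gmap G H) p q : gmap_path F (p ++ q) = gmap_path F p ++ gmap_path F q.
Proof. by rewrite /gmap_path map_cat flatten_cat. Qed.

Lemma gp_rev (F : gmap G H) p : gmap_path F (rev_path p) = rev_path (gmap_path F p).
Proof.
elim: p => //= l p IH.
rewrite rev_path_cons gp_cat IH gp_cons rev_path_cat /= cats0; congr (_ ++ _).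
by case: l => e [] //=; rewrite rev_pathK.
Qed.

End GP.

Section GP2.
Variables G H K : graph.
Lemma gp_comp (F : gmap H K) (F' : gmap G H) p :
  gmap_path (gmap_comp F F') p = gmap_path F (gmap_path F' p).
Proof.
elim: p => //= l p IH.
rewrite gp_cons gp_cons IH gp_cat; congr (_ ++ _).
by case: l => e [] //=; rewrite gp_rev.
Qed.

Lemma gp_loop (F : gmap G H) (c : gV H) p :
  (forall e, is_path c (gme F e) c) -> is_path c (gmap_path F p) c.
Proof.
move=> HF; elim: p => [|l p IH] /=; first by [].
rewrite gp_cons; apply: is_path_cat IH.
by case: l => e [] /=; [apply: HF | apply: is_path_rev; apply: HF].
Qed.

Lemma path_hom (F : gmap G G) (t : gV G -> seq (letter G)) (P : pred (gE G)) :
  (forall e, P e -> hom (gme F e) (t (gsrc e) ++ [:: (e, true)] ++ rev_path (t (gtgt e)))) ->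
  forall p u v, is_path u p v -> all (fun l => P l.1) p ->
  hom (gmap_path F p) (t u ++ p ++ rev_path (t v)).
Proof.
move=> HF; elim=> [|l p IH] u v /=.
  by move/eqP ->; rewrite canc1'.
case/andP => /eqP <- Hp /andP[Pl Ap].
rewrite gp_cons (IH _ _ Hp Ap); clear Hp.
case: l Pl => e [] Pl; rewrite /img /ltgt /lsrc /= HF //.
  by rewrite -!catA /= canc2.
by rewrite !rev_path_cat rev_pathK -!catA /= canc2.
Qed.


Lemma gp_path (F : gmap G H) : is_gmap F -> forall p u v, is_path u p v ->
  is_path (gmv F u) (gmap_path F p) (gmv F v).
Proof.
move=> HF; elim=> [|l p IH] u v /=; first by move/eqP ->.
case/andP => /eqP <- /IH Hp; rewrite gp_cons; apply: is_path_cat Hp.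
by case: l => e [] /=; rewrite /img /lsrc /ltgt /=; [apply: HF | apply: is_path_rev; apply: HF].
Qed.
End GP2.

Section Alg.
Variable G : graph.
Implicit Types (p q r x y : seq (letter G)).

Lemma algB (Gd Ga uy Pa Py : seq (letter G)) :
  hom (rev_path Gd ++ rev_path (rev_path (uy ++ Ga ++ Pa ++ rev_path Py) ++ rev_path Gd) ++ Py)
      (uy ++ [::] ++ rev_path (rev_path Ga) ++ Pa).
Proof.
rewrite rev_path_cat !rev_pathK -catA canc2 -!catA canc2' cats0 /=.
reflexivity.
Qed.

Lemma algD (Gd Ga ud Pa : seq (letter G)) : Gd = ud ++ Ga ->
  hom ([::] ++ rev_path (rev_path Gd) ++ Pa) (ud ++ [::] ++ rev_path (rev_path Ga) ++ Pa).
Proof. by move=> ->; rewrite !rev_pathK /= catA; reflexivity. Qed.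

Lemma algE (Ga Gd Gf ud ue uf Pa : seq (letter G)) :
  Ga = rev_path uf ++ ud ++ rev_path ue -> Gd = ud ++ Ga -> Gf = uf ++ Ga ->
  hom (rev_path Gf ++ rev_path (rev_path Gd) ++ Pa) (ue ++ [::] ++ rev_path (rev_path Ga) ++ Pa).
Proof.
move=> HGa -> ->; rewrite !rev_pathK /= !rev_path_cat HGa !rev_path_cat !rev_pathK -!catA.
rewrite canc1 canc2. reflexivity.
Qed.

Lemma algU (X A T : seq (letter G)) : hom (((X ++ T) ++ rev_path (A ++ T)) ++ A) X.
Proof. by rewrite rev_path_cat -!catA canc1 canc2'; rewrite cats0; reflexivity. Qed.

Lemma algGa (a b c g : gE G) (T : seq (letter G)) :
  hom (rev_path (([:: (a,true); (c,false)] ++ T) ++ rev_path ([:: (a,true); (g,false)] ++ T)) ++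
       ((([:: (a,true); (b,false)] ++ T) ++ rev_path ([:: (a,true); (g,false)] ++ T)) ++
        rev_path (([:: (c,true); (b,false)] ++ T) ++ rev_path ([:: (a,true); (g,false)] ++ T))))
      [:: (a,true); (g,false)].
Proof.
rewrite !rev_path_cat !rev_pathK -!catA (canc1 T) (canc1 T) (canc2 [:: (a,true); (g,false)]) (canc1 T) /=.
rewrite /rev_path /linv /= (_ : rev _ = [:: (b,true); (c,false)]) // cancf cancf canct; reflexivity.
Qed.

Lemma algGy (X A Ta Ty tv : seq (letter G)) :
  hom (((X ++ Ty) ++ rev_path (A ++ Ta)) ++ (A ++ (([::] ++ Ta ++ rev_path tv) ++
        rev_path ([::] ++ Ty ++ rev_path tv)))) X.
Proof.
rewrite /= !rev_path_cat !rev_pathK -!catA (canc2 A) (canc2 Ta) (canc2 tv) canc1'.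
by rewrite cats0; reflexivity.
Qed.
End Alg.


Definition E_ (k : nat) : 'I_7 := (L k true).1.

Fixpoint alt (b : bool) (k : nat) : seq bool :=
  if k is k'.+1 then b :: alt (~~ b) k' else [::].

Definition TW (y : 'I_7) (m : nat) : seq ('I_7 * bool) :=
  match val y with
  | 0 | 3 | 4 | 5 => flatten (nseq m [:: L 0 true; L 1 false]) ++ [:: L 0 true]
  | 1 => flatten (nseq m [:: L 1 true; L 2 false]) ++ [:: L 1 true]
  | 2 => flatten (nseq m [:: L 2 true; L 0 false]) ++ [:: L 2 true]
  | _ => flatten (nseq m [:: L 1 true; L 0 false]) ++ [:: L 1 true]
  end.
Definition h0 (y : 'I_7) : nat :=
  match val y with 0 => 0 | 1 => 1 | 2 => 2 | 3 => 0 | 4 => 2 | 5 => 0 | _ => 1 end.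
Definition h1 (y : 'I_7) : nat :=
  match val y with 0 => 6 | 1 => 3 | 2 => 5 | 3 => 1 | 4 => 1 | 5 => 2 | _ => 4 end.

Lemma phi_B k y : k != 1 ->
  phi k y = L (h0 y) true :: L (h1 y) false :: TW y ((k - 3)./2).
Proof.
rewrite /phi => /negbTE ->.
by case: y => [[|[|[|[|[|[|[|?]]]]]]] Hy].
Qed.

Lemma alt_nseq m : map snd (flatten (nseq m [:: L 0 true; L 0 false])) ++ [:: true] = alt true m.*2.+1.
Proof. by elim: m => //= m ->. Qed.

Lemma snd_flat m (a b : nat) :
  map snd (flatten (nseq m [:: L a true; L b false])) = map snd (flatten (nseq m [:: L 0 true; L 0 false])).
Proof. by elim: m => //= m ->. Qed.

Lemma TW_dirs y m : map snd (TW y m) = alt true m.*2.+1.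
Proof.
rewrite -alt_nseq /TW.
by case: y => [[|[|[|[|[|[|[|?]]]]]]] Hy]; rewrite map_cat snd_flat.
Qed.

Lemma phi_dirs k y : odd k -> map snd (phi k y) = alt true k.
Proof.
case: (eqVneq k 1) => [->|k1 ok]; first by rewrite /phi; case: y.
rewrite phi_B //= TW_dirs.
case: k k1 ok => [|[|[|k]]] //= _ ok.
have -> : k.+3 - 3 = k by rewrite subSS subSS subSS subn0.
move: ok; rewrite negbK => ok; by rewrite -[in RHS](odd_double_half k) (negbTE ok).
Qed.

Section Spec.
Variable n : nat.
Variable f : gmap (star n) (star n).
Variable sinv : 'I_n -> 'I_n.
Definition sig (i : 'I_n) : 'I_n := (head (i, true) (gme f i)).1.
Hypothesis Hf : star_map f.
Hypothesis Hs1 : forall j, sig (sinv j) = j.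
Hypothesis Hs2 : forall i, sinv (sig i) = i.

Notation SS := (split_star n).
Definition S := split_map f.

Definition Zm (s : seq ('I_7 * bool)) (w : seq (letter (star n))) : seq (letter SS) :=
  [seq (((ll.1.1, (ll.2.1 : 'I_n)) : gE SS), ll.1.2) | ll <- zip s w].

Lemma star_dirs (u v : option 'I_n) w : is_path (G:=star n) u w v ->
  map snd w = alt (u == None) (size w) /\ (v == None) = (u == None) (+) odd (size w).
Proof.
elim: w u => [|[e b] w IH] u /=; first by move/eqP ->; rewrite addbF.
case/andP => /eqP <- /IH [-> ->].
by case: b; rewrite /lsrc /ltgt /=; split => //; case: (odd _).
Qed.

Lemma Zpath s w (u v : option 'I_n) : is_path (G:=star n) u w v ->
  map snd s = map snd w -> is_path (G:=SS) u (Zm s w) v.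
Proof.
elim: w s u => [|[e b] w IH] [|[y b'] s] u //=.
case/andP => /eqP <- Hp [Hb Hs]; subst b'.
case: b Hp; rewrite /lsrc /ltgt /= => Hp; first exact: (IH s _ Hp Hs).
by apply/andP; split; [exact: eqxx | exact: (IH s _ Hp Hs)].
Qed.

Lemma caseAB i :
  (gme f i = [:: (sig i, true)] /\ gmv f (Some i) = Some (sig i)) \/
  exists w, gme f i = [:: (sig i, true), (sig i, false) & w] /\
            is_path (G:=star n) None w (gmv f (Some i)).
Proof.
case: Hf => Hg HN HS _.
have := Hg i; rewrite /= HN /sig.
move: (HS i); case: (gmv f (Some i)) => // v _.
case: (gme f i) => [|[e b] w] //=.
case: b; rewrite /lsrc /ltgt //=.
case: w => [|[e' b'] w] /=; first by move/eqP => [->]; left.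
case: b'; rewrite /lsrc /ltgt //= => /andP[/eqP [->] Hp]; right; by exists w.
Qed.

Lemma S_gmap : is_gmap S.
Proof.
case: Hf => Hg HN HS _ [y i].
rewrite /S /split_map /= HN.
have := Hg i; rewrite /= HN => Hp.
have [D P] := star_dirs Hp.
apply: (Zpath Hp); rewrite D.
move: (HS i) P; case: (gmv f (Some i)) => //= v _ /esym.
by move=> /negbFE; apply: phi_dirs.
Qed.

Lemma S_A i y : gme f i = [:: (sig i, true)] ->
  gme S (y, i) = [:: ((y, sig i), true)].
Proof. by rewrite /S /split_map /= => ->. Qed.

Lemma S_B i w y : gme f i = [:: (sig i, true), (sig i, false) & w] ->
  gme S (y, i) = [:: ((E_ (h0 y), sig i), true), ((E_ (h1 y), sig i), false)
                   & Zm (TW y (((size w).+2 - 3)./2)) w].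
Proof. by rewrite /S /split_map /= => ->; rewrite phi_B. Qed.

Definition u (y : 'I_7) (i : 'I_n) : seq (letter SS) :=
  [:: ((y, i), true); ((E_ 0, i), false)].
Definition kk i := size (gme f i).
Definition Ga i := rev_path (u (E_ 5) i) ++ u (E_ 3) i ++ rev_path (u (E_ 4) i).
Definition Gd i := u (E_ 3) i ++ Ga i.
Definition Gf i := u (E_ 5) i ++ Ga i.
Definition g0e (e : gE SS) : seq (letter SS) :=
  let i := sinv e.2 in
  if kk i == 1 then u e.1 i else
  match val e.1 with
  | 0 => [::] | 1 => rev_path (Gd i) | 2 => rev_path (Gf i) | _ => rev_path (Ga i) end.
Definition g0 : gmap SS SS := @GMap SS SS (fun _ : option 'I_n => (None : option 'I_n)) g0e.
Definition Tl (y : 'I_7) i := drop 2 (gme S (y, i)).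
Definition Gy y i := u y i ++ Ga i ++ gmap_path g0 (Tl (E_ 0) i) ++
                      rev_path (gmap_path g0 (Tl y i)).
Definition ge (e : gE SS) : seq (letter SS) :=
  let i := sinv e.2 in
  if kk i == 1 then u e.1 i else
  match val e.1 with
  | 0 => [::] | 1 => rev_path (Gd i) | 2 => rev_path (Gf i)
  | 3 => rev_path (Gy (E_ 1) i) ++ rev_path (Gd i)
  | 4 => rev_path (Gy (E_ 6) i) ++ rev_path (Gd i)
  | 5 => rev_path (Gy (E_ 2) i) ++ rev_path (Gf i)
  | _ => rev_path (Ga i) end.
Definition g : gmap SS SS := @GMap SS SS (fun _ : option 'I_n => (None : option 'I_n)) ge.

Arguments TW : simpl never.
Arguments u : simpl never.
Lemma TW3 m : TW (E_ 3) m = TW (E_ 0) m. Proof. by []. Qed.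
Lemma TW4 m : TW (E_ 4) m = TW (E_ 0) m. Proof. by []. Qed.
Lemma TW5 m : TW (E_ 5) m = TW (E_ 0) m. Proof. by []. Qed.

Lemma u_loop y i : is_path (G:=SS) None (u y i) None.
Proof. by rewrite /= !eqxx. Qed.

Lemma g0_loop e : is_path (G:=SS) None (g0e e) None.
Proof.
have Ha : forall i, is_path (G:=SS) None (Ga i) None.
  move=> i; rewrite /Ga; apply: (is_path_cat (G:=SS) (v:=None)); first exact/is_path_rev/u_loop.
  apply: (is_path_cat (G:=SS) (v:=None)); first exact: u_loop.
  exact/is_path_rev/u_loop.
rewrite /g0e; case: ifP => _; first exact: u_loop.
case: (val e.1) => [|[|[|?]]] //; apply: is_path_rev => //.
- exact: (is_path_cat (u_loop _ _) (Ha _)).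
- exact: (is_path_cat (u_loop _ _) (Ha _)).
Qed.

Lemma g_loop e : is_path (G:=SS) None (ge e) None.
Proof.
have Ha : forall i, is_path (G:=SS) None (Ga i) None.
  move=> i; rewrite /Ga; apply: (is_path_cat (G:=SS) (v:=None)); first exact/is_path_rev/u_loop.
  apply: (is_path_cat (G:=SS) (v:=None)); first exact: u_loop.
  exact/is_path_rev/u_loop.
have Hd : forall i y, is_path (G:=SS) None (u y i ++ Ga i) None.
  by move=> i y; exact: (is_path_cat (u_loop _ _) (Ha _)).
have Hy : forall y i, is_path (G:=SS) None (Gy y i) None.
  move=> y i; rewrite /Gy; apply: is_path_cat (u_loop _ _) _; apply: is_path_cat (Ha _) _.
  apply: is_path_cat; first by apply: gp_loop => e0; exact: g0_loop.
  by apply: is_path_rev; by apply: gp_loop => e0; exact: g0_loop.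
rewrite /ge; case: ifP => _; first exact: u_loop.
have R : forall p, is_path (G:=SS) None p None -> is_path (G:=SS) None (rev_path p) None.
  by move=> p; apply: is_path_rev.
have C : forall p q, is_path (G:=SS) None p None -> is_path (G:=SS) None q None ->
  is_path (G:=SS) None (p ++ q) None.
  by move=> p q; apply: is_path_cat.
case: (val e.1) => [|[|[|[|[|[|?]]]]]] //; repeat first [apply: u_loop | apply: Hy | apply: Ha | apply: Hd | apply: C | apply: R].
Qed.

Lemma flat_small m (a b : nat) : a < 3 -> b < 3 ->
  all (fun x : 'I_7 * bool => val x.1 < 3) (flatten (nseq m [:: L a true; L b false])).
Proof.
move=> Ha Hb; elim: m => //= m ->; rewrite andbT /=.
by rewrite !modn_small ?Ha ?Hb // (leq_trans _ (isT : 3 <= 7)).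
Qed.

Lemma TW_small y m : all (fun x : 'I_7 * bool => val x.1 < 3) (TW y m).
Proof.
by rewrite /TW; case: y => [[|[|[|[|[|[|[|?]]]]]]] Hy]; rewrite all_cat flat_small.
Qed.

Lemma Zm_small s w : all (fun x : 'I_7 * bool => val x.1 < 3) s ->
  all (fun l : letter SS => val l.1.1 < 3) (Zm s w).
Proof. by elim: s w => [|x s IH] [|l w] //= /andP[-> H]; apply: IH. Qed.

Lemma gp_g_g0 p : all (fun l : letter SS => val l.1.1 < 3) p ->
  gmap_path g p = gmap_path g0 p.
Proof.
elim: p => //= l p IH /andP[H /IH]; rewrite !gp_cons => ->; congr (_ ++ _).
have E : ge l.1 = g0e l.1.
  rewrite /ge /g0e; case: ifP => // _.
  by case: l.1.1 H => [[|[|[|k]]] Hk].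
by rewrite /img /= E.
Qed.

Lemma gp_t (F : gmap SS SS) e : gmap_path F [:: (e, true)] = gme F e.
Proof. by rewrite /gmap_path /= cats0. Qed.

Lemma u0 i q : hom (u (E_ 0) i ++ q) q.
Proof. exact: canct. Qed.

Lemma L1 i y : hom (gmap_path g (gme S (y, i))) (u y i ++ gmap_path g (gme S (E_ 0, i))).
Proof.
case: (caseAB i) => [[HA _]|[w [HB Hw]]].
  rewrite !(S_A _ HA) !gp_t /= /ge /= Hs2 /kk HA /=.
  by rewrite /u cancf.
have Hk : (kk i == 1) = false by rewrite /kk HB.
set m := ((size w).+2 - 3)./2.
have Sm : forall y, gmap_path g (Zm (TW y m) w) = gmap_path g0 (Zm (TW y m) w).
  by move=> y'; apply: gp_g_g0; apply: Zm_small; apply: TW_small.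
have Tl_E : forall y, Tl y i = Zm (TW y m) w by move=> y'; rewrite /Tl (S_B _ HB) /= drop0.
case: y => k Hk7; have -> : Ordinal Hk7 = E_ k by apply: val_inj; rewrite /= modn_small.
move: Hk7; do 7 (try (case: k => [|k] //)); move=> _;
rewrite !(S_B _ HB) !gp_cons !Sm /img /= /ge /= ?Hs2 ?Hk /Gy ?Tl_E ?TW3 ?TW4 ?TW5.
- by rewrite canct; reflexivity.
- exact: algB.
- exact: algB.
- have H := @algD SS (Gd i) (Ga i) (u (E_ 3) i) (gmap_path g0 (Zm (TW (E_ 0) m) w)) (erefl _). exact: H.
- have H := @algE SS (Ga i) (Gd i) (Gf i) (u (E_ 3) i) (u (E_ 4) i) (u (E_ 5) i) (gmap_path g0 (Zm (TW (E_ 0) m) w)) (erefl _) (erefl _) (erefl _). exact: H.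
- have H := @algD SS (Gf i) (Ga i) (u (E_ 5) i) (gmap_path g0 (Zm (TW (E_ 0) m) w)) (erefl _). exact: H.
- exact: algB.
Qed.


Lemma SU y i : gmap_path S (u y i) = gme S (y, i) ++ rev_path (gme S (E_ 0, i)).
Proof. by rewrite /u !gp_cons /img /= cats0. Qed.

Section CaseB.
Variables (i : 'I_n) (w : seq (letter (star n))).
Hypothesis HB : gme f i = [:: (sig i, true), (sig i, false) & w].

Lemma SGa : hom (gmap_path S (Ga i)) [:: ((E_ 0, sig i), true); ((E_ 6, sig i), false)].
Proof.
rewrite /Ga !gp_cat !gp_rev !SU !(S_B _ HB).
have H := @algGa SS (E_ 0, sig i) (E_ 1, sig i) (E_ 2, sig i) (E_ 6, sig i)
   (Zm (TW (E_ 0) (((size w).+2 - 3)./2)) w).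
exact: H.
Qed.

Lemma SGd : hom (gmap_path S (Gd i)) [:: ((E_ 0, sig i), true); ((E_ 1, sig i), false)].
Proof.
rewrite /Gd gp_cat SGa SU !(S_B _ HB).
have H := @algU SS [:: ((E_ 0, sig i), true); ((E_ 1, sig i), false)]
   [:: ((E_ 0, sig i), true); ((E_ 6, sig i), false)]
   (Zm (TW (E_ 0) (((size w).+2 - 3)./2)) w).
exact: H.
Qed.

Lemma SGf : hom (gmap_path S (Gf i)) [:: ((E_ 0, sig i), true); ((E_ 2, sig i), false)].
Proof.
rewrite /Gf gp_cat SGa SU !(S_B _ HB).
have H := @algU SS [:: ((E_ 0, sig i), true); ((E_ 2, sig i), false)]
   [:: ((E_ 0, sig i), true); ((E_ 6, sig i), false)]
   (Zm (TW (E_ 0) (((size w).+2 - 3)./2)) w).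
exact: H.
Qed.
End CaseB.

Lemma yE (P : 'I_7 -> Prop) : P (E_ 0) -> P (E_ 1) -> P (E_ 2) -> P (E_ 3) -> P (E_ 4) ->
  P (E_ 5) -> P (E_ 6) -> forall y, P y.
Proof.
move=> H0 H1 H2 H3 H4 H5 H6 [k Hk].
have -> : Ordinal Hk = E_ k by apply: val_inj; rewrite /= modn_small.
by move: Hk; do 7 (try (case: k => [|k] //)).
Qed.

Lemma hrev2 (a b : gE SS) : rev_path [:: (a, true); (b, false)] = [:: (b, true); (a, false)].
Proof. by []. Qed.

Lemma base y j : val y < 3 -> hom (gmap_path S (g0e (y, j))) (u y j).
Proof.
have Hj := Hs1 j; set i := sinv j in Hj *.
case: (caseAB i) => [[HA _]|[w [HB Hw]]].
  rewrite /g0e /= -/i /kk HA /= SU !(S_A _ HA) Hj; reflexivity.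
have Hk : (kk i == 1) = false by rewrite /kk HB.
rewrite /g0e /= -/i Hk.
elim/yE: y => //= _.
- by symmetry; exact: (canct (G:=SS) (E_ 0, j) [::]).
- by rewrite gp_rev (SGd HB) hrev2 Hj; reflexivity.
- by rewrite gp_rev (SGf HB) hrev2 Hj; reflexivity.
Qed.

Definition tv (v : option 'I_n) : seq (letter SS) :=
  if v is Some l then [:: ((E_ 0, l), true)] else [::].

Lemma Sg0_path p v : is_path (G:=SS) None p v ->
  all (fun l : letter SS => val l.1.1 < 3) p ->
  hom (gmap_path S (gmap_path g0 p)) ([::] ++ p ++ rev_path (tv v)).
Proof.
move=> Hp Ha; rewrite -gp_comp.
have := @path_hom SS (gmap_comp S g0) tv (fun e : gE SS => val e.1 < 3) _ p None v Hp Ha.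
apply => -[y l] Hy /=.
exact: base.
Qed.

Lemma Tl_path i w y : gme f i = [:: (sig i, true), (sig i, false) & w] ->
  is_path (G:=SS) None (Tl y i) (gmv f (Some i)).
Proof.
move=> HB; have := S_gmap (y, i); rewrite /is_gmap /Tl (S_B _ HB).
by case/andP => _ /andP[_ H]; rewrite /= drop0.
Qed.

Lemma SGy i w y : gme f i = [:: (sig i, true), (sig i, false) & w] ->
  hom (gmap_path S (Gy y i)) [:: ((E_ (h0 y), sig i), true); ((E_ (h1 y), sig i), false)].
Proof.
move=> HB.
have Sm : forall y', all (fun l : letter SS => val l.1.1 < 3) (Tl y' i).
  by move=> y'; rewrite /Tl (S_B _ HB) /= drop0; apply/Zm_small/TW_small.
rewrite /Gy gp_cat SU [gmap_path S (Ga i ++ _)]gp_cat (SGa HB) gp_cat gp_rev (Sg0_path (Tl_path (E_ 0) HB) (Sm _)) (Sg0_path (Tl_path y HB) (Sm _)) /Tl !(S_B _ HB) /= !drop0.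
have H := @algGy SS [:: ((E_ (h0 y), sig i), true); ((E_ (h1 y), sig i), false)]
   [:: ((E_ 0, sig i), true); ((E_ 6, sig i), false)]
   (Zm (TW (E_ 0) (((size w).+2 - 3)./2)) w) (Zm (TW y (((size w).+2 - 3)./2)) w)
   (tv (gmv f (Some i))).
exact: H.
Qed.

Lemma L2 j y : hom (gmap_path S (ge (y, j))) (u y j ++ gmap_path S (ge (E_ 0, j))).
Proof.
have Hj := Hs1 j; set i := sinv j in Hj *.
case: (caseAB i) => [[HA _]|[w [HB Hw]]].
  rewrite /ge /= -/i /kk HA /= !SU !(S_A _ HA) Hj.
  by rewrite /u /= cancf; reflexivity.
have Hk : (kk i == 1) = false by rewrite /kk HB.
rewrite /ge /= -/i Hk.
elim/yE: y => /=.
- by rewrite /u canct; reflexivity.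
- by rewrite gp_rev (SGd HB) hrev2 Hj; reflexivity.
- by rewrite gp_rev (SGf HB) hrev2 Hj; reflexivity.
- by rewrite gp_cat !gp_rev (SGd HB) (SGy (E_ 1) HB) !hrev2 Hj /= cancf; reflexivity.
- by rewrite gp_cat !gp_rev (SGd HB) (SGy (E_ 6) HB) !hrev2 Hj /= cancf; reflexivity.
- by rewrite gp_cat !gp_rev (SGf HB) (SGy (E_ 2) HB) !hrev2 Hj /= cancf; reflexivity.
- by rewrite gp_rev (SGa HB) hrev2 Hj; reflexivity.
Qed.
End Spec.

Theorem mainTheorem7 (n : nat) (f : gmap (star n) (star n)) :
  star_map f -> homotopy_equivalence (split_map f).
Proof.
move=> Hf.
have inj : injective (sig f) by case: Hf.
pose sinv := invF inj.
have Hs1 : forall j, sig f (sinv j) = j by move=> j; rewrite /sinv f_invF.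
have Hs2 : forall i, sinv (sig f i) = i by move=> i; rewrite /sinv invF_f.
split; first exact: S_gmap.
exists (g f sinv); split; first by move=> e; exact: g_loop.
split.
- exists (fun v => match v with
                  | None => [::]
                  | Some i => rev_path (gmap_path (g f sinv) (gme (S f) (E_ 0, i))) ++
                              [:: ((E_ 0, i), true)] end).
  split.
    case=> [i|] //=.
    apply: (is_path_cat (G:=split_star n) (v:=None)); last by rewrite /= !eqxx.
    by apply: is_path_rev; apply: gp_loop => e; exact: g_loop.
  case=> y i.
  have H := hom_reduce (L1 Hf Hs2 i y).
  apply: etrans H _; congr reduce.
  by rewrite [in RHS]rev_path_cat rev_pathK.
- exists (fun v => match v with
                  | None => [::]
                  | Some i => rev_path (gmap_path (S f) (ge f sinv (E_ 0, i))) ++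
                              [:: ((E_ 0, i), true)] end).
  split.
    case=> [i|] /=; last by case: Hf => _ -> _ _.
    apply: (is_path_cat (G:=split_star n) (v:=None)); last by rewrite /= !eqxx.
    apply: is_path_rev.
    have := gp_path (S_gmap Hf) (g_loop f sinv (E_ 0, i)).
    by rewrite /S /split_map /=; case: Hf => _ -> _ _.
  case=> y i.
  have H := hom_reduce (L2 Hf Hs1 i y).
  apply: etrans H _; congr reduce.
  by rewrite [in RHS]rev_path_cat rev_pathK.
Qed.
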